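(* Let $E^+$ be a valuation ring of finite rank with fraction field $E$, and let $M$ be a torsionfree $E^+$-module such that $M\otimes_{E^+}E$ is a finite-dimensional $E$-vector space. Then the $E^+/p$-module $M/p$ is a countable filtered colimit of free $E^+/p$-modules of rank at most $\dim_E(M\otimes_{E^+}E)$. In particular, $M/p$ has projective dimension at most $1$ as an $E^+/p$-module.
   Context: $p$ is a prime. The rank of a valuation ring is its number of nonzero prime ideals. *)

(* Defs.v *)
From HB Require Import structures.
From mathcomp Require Import all_boot all_order all_algebra fraction.
Set Implicit Arguments.
Unset Strict Implicit.
Unset Printing Implicit Defensive.
Import Order.TTheory GRing.Theory Num.Theory.
Local Open Scope ring_scope.

Definition in_ring (R : idomainType) (x : {fraction R}) : Prop :=
  exists a : R, x = @FracField.tofrac R a.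

Definition valuation_ring (R : idomainType) : Prop :=
  forall x : {fraction R}, x != 0 -> in_ring x \/ in_ring x^-1.

Definition prime_ideal (R : idomainType) (I : R -> Prop) : Prop :=
  [/\ I 0,
      forall a b, I a -> I b -> I (a + b),
      forall r a, I a -> I (r * a),
      ~ I 1 &
      forall a b, I (a * b) -> I a \/ I b].

Definition nonzero_prime_ideal (R : idomainType) (I : R -> Prop) : Prop :=
  prime_ideal I /\ exists a, I a /\ a != 0.

(* finite rank: there are only finitely many nonzero prime ideals *)
Definition finite_rank (R : idomainType) : Prop :=
  exists (n : nat) (J : nat -> R -> Prop),
    forall I : R -> Prop, nonzero_prime_ideal I ->
      exists k, (k < n)%N /\ forall x, I x <-> J k x.

Definition torsionfree (R : idomainType) (M : lmodType R) : Prop :=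
  forall (r : R) (m : M), r *: m = 0 -> r = 0 \/ m = 0.

(* dim_E (M (x)_R E) = d, E = Frac(R), M torsionfree:
   there are m_0,...,m_{d-1} in M whose images m_k (x) 1 form an E-basis of
   M (x)_R E = S^{-1} M (S = R \ {0}), written out after clearing
   denominators: they are R-linearly independent, and every element of M
   becomes an R-linear combination of them after multiplication by a
   nonzero scalar. *)
Definition tensor_frac_dim (R : idomainType) (M : lmodType R) (d : nat) : Prop :=
  exists m : 'I_d -> M,
    (forall r : 'I_d -> R, \sum_(k < d) r k *: m k = 0 -> forall k, r k = 0) /\
    (forall x : M, exists (s : R) (r : 'I_d -> R),
        s != 0 /\ s *: x = \sum_(k < d) r k *: m k).

Definition lin (A : comPzRingType) (U V : lmodType A) (f : U -> V) : Prop :=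
  forall (a : A) (x y : U), f (a *: x + y) = a *: f x + f y.

Definition projective_mod (A : comPzRingType) (P : lmodType A) : Prop :=
  forall (X Y : lmodType A) (s : X -> Y) (h : P -> Y),
    lin s -> (forall y, exists x, s x = y) -> lin h ->
    exists l : P -> X, lin l /\ forall u, s (l u) = h u.

Definition projdim_le1 (A : comPzRingType) (N : lmodType A) : Prop :=
  exists (P1 P0 : lmodType A) (f : P1 -> P0) (g : P0 -> N),
    [/\ projective_mod P1 /\ projective_mod P0, lin f /\ lin g,
        injective f, (forall y, exists x, g x = y) &
        forall x, g x = 0 <-> exists z, f z = x].

Definition countable_filtered_colimit_of_free_le (A : comPzRingType)
    (N : lmodType A) (d : nat) : Prop :=
  exists (I : countType) (le : rel I) (n : I -> nat)
         (T : forall i j : I, 'M[A]_(n i, n j))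
         (phi : forall i : I, 'rV[A]_(n i) -> N),
    [/\ (exists i : I, True),
        (forall i, le i i) /\
        (forall i j k, le i j -> le j k -> le i k),
        (forall i j, exists k, le i k /\ le j k),
        (forall i, (n i <= d)%N) &
    [/\ (forall i, T i i = 1%:M),
        (forall i j k, le i j -> le j k -> T i k = T i j *m T j k),
        (forall i, lin (phi i)),
        (forall i j, le i j -> forall x, phi i x = phi j (x *m T i j)) &
        (forall (Q : lmodType A) (psi : forall i : I, 'rV[A]_(n i) -> Q),
            (forall i, lin (psi i)) ->
            (forall i j, le i j -> forall x, psi i x = psi j (x *m T i j)) ->
            exists g : N -> Q,
              (lin g /\ forall i x, g (phi i x) = psi i x) /\
              forall g' : N -> Q,
                (lin g' /\ forall i x, g' (phi i x) = psi i x) -> g' = g)]].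

(* Main.v *)
Require Import Defs.
From HB Require Import structures.
From mathcomp Require Import all_boot all_order all_algebra.
From mathcomp Require Import finmap monalg zify ring.
From Stdlib Require Import ClassicalEpsilon Classical FunctionalExtensionality.
Import GRing.Theory.
Local Open Scope ring_scope.
Set Implicit Arguments.
Unset Strict Implicit.
Unset Printing Implicit Defensive.
Section FS.
Variables (A : comPzRingType) (d : nat).
Definition FS : Type := {malg 'rV[A]_d [nat]}.
HB.instance Definition _ := GRing.Zmodule.on FS.
Definition fsscale (c : A) (g : FS) : FS := [malg i in msupp g => c *: g@_i].
Lemma fsscaleE c g i : (fsscale c g)@_i = c *: g@_i.
Proof. by rewrite mcoeffE; case: msuppP; rewrite ?scaler0. Qed.
Lemma fs_scalerA a b v : fsscale a (fsscale b v) = fsscale (a * b) v.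
Proof. by apply/malgP=> i; rewrite !fsscaleE scalerA. Qed.
Lemma fs_scale1r : left_id 1 fsscale.
Proof. by move=> v; apply/malgP=> i; rewrite !fsscaleE scale1r. Qed.
Lemma fs_scalerDr : right_distributive fsscale +%R.
Proof. by move=> a u v; apply/malgP=> i; rewrite !(fsscaleE, mcoeffD) scalerDr. Qed.
Lemma fs_scalerDl v : {morph fsscale^~ v: a b / a + b}.
Proof. by move=> a b; apply/malgP=> i; rewrite !(fsscaleE, mcoeffD) scalerDl. Qed.
HB.instance Definition _ := GRing.Zmodule_isLmodule.Build A FS
  fs_scalerA fs_scale1r fs_scalerDr fs_scalerDl.
Lemma fsZE c (g : FS) i : (c *: g)@_i = c *: g@_i.
Proof. exact: fsscaleE. Qed.
Definition fsU (i : nat) (v : 'rV[A]_d) : FS := << v *g i >>.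
Lemma fsUE i v j : (fsU i v)@_j = if i == j then v else 0.
Proof. by rewrite /fsU mcoeffU; case: eqP. Qed.
Lemma fsU_lin i : lin (fsU i).
Proof. by move=> a x y; apply/malgP=> j; rewrite mcoeffD fsZE !fsUE; case: eqP; rewrite ?scaler0 ?addr0. Qed.
Definition fc (g : FS) (i : nat) : 'rV[A]_d := mcoeff i g.
Lemma fcD x y j : fc (x + y) j = fc x j + fc y j. Proof. exact: mcoeffD. Qed.
Lemma fcB x y j : fc (x - y) j = fc x j - fc y j. Proof. exact: mcoeffB. Qed.
Lemma fcZ a x j : fc (a *: x) j = a *: fc x j. Proof. exact: fsZE. Qed.
Lemma fc0 j : fc 0 j = 0. Proof. exact: mcoeff0. Qed.
Lemma fcU i v j : fc (fsU i v) j = if i == j then v else 0. Proof. exact: fsUE. Qed.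
Lemma fcP x y : (forall j, fc x j = fc y j) -> x = y. Proof. by move=> h; apply/malgP. Qed.
Definition bnd (g : FS) : nat := \max_(i <- msupp g) i.+1.
Lemma bnd_out (g : FS) i : (bnd g <= i)%N -> g@_i = 0.
Proof.
move=> h; apply/eqP; rewrite mcoeff_eq0; apply/negP=> hi.
have : (i.+1 <= bnd g)%N by rewrite /bnd (bigD1_seq i) //= ?leq_maxl // fset_uniq.
by rewrite ltnNge h.
Qed.
Lemma fs_decomp (g : FS) B : (bnd g <= B)%N -> g = \sum_(i < B) fsU i (fc g i).
Proof.
move=> hB; apply/malgP=> j; rewrite raddf_sum /=.
under eq_bigr do rewrite fsUE.
case: (ltnP j B) => hj.
  by rewrite (bigD1 (Ordinal hj)) //= eqxx big1 ?addr0 // => i /eqP hi; case: eqP => // e; case: hi; apply: val_inj.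
rewrite big1 ?bnd_out //; first exact: leq_trans hj.
by move=> i _; case: eqP => // e; move: (ltn_ord i); rewrite e ltnNge hj.
Qed.
End FS.
From Stdlib Require Import ClassicalEpsilon.

Section LinFacts.
Variables (A : comPzRingType) (U V : lmodType A).
Lemma lin_add (f : U -> V) : lin f -> forall x y, f (x + y) = f x + f y.
Proof. by move=> h x y; rewrite -[x in LHS]scale1r h scale1r. Qed.
Lemma lin0 (f : U -> V) : lin f -> f 0 = 0.
Proof. by move=> h; apply: (addrI (f 0)); rewrite addr0 -lin_add // addr0. Qed.
Lemma linZ (f : U -> V) : lin f -> forall a x, f (a *: x) = a *: f x.
Proof. by move=> h a x; rewrite -[a *: x]addr0 h (lin0 h) addr0. Qed.
Lemma linN (f : U -> V) : lin f -> forall x, f (- x) = - f x.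
Proof. by move=> h x; rewrite -scaleN1r linZ // scaleN1r. Qed.
Lemma linB (f : U -> V) : lin f -> forall x y, f (x - y) = f x - f y.
Proof. by move=> h x y; rewrite lin_add // linN. Qed.
Lemma lin_sum (f : U -> V) : lin f -> forall (I : Type) (r : seq I) (P : pred I) (F : I -> U),
  f (\sum_(i <- r | P i) F i) = \sum_(i <- r | P i) f (F i).
Proof.
move=> h I r P F; elim/big_rec2: _ => [|i y1 y2 _ <-]; first exact: lin0.
by rewrite lin_add.
Qed.
Lemma lin_comp (W : lmodType A) (f : U -> V) (g : V -> W) : lin f -> lin g -> lin (g \o f).
Proof. by move=> hf hg a x y /=; rewrite hf hg. Qed.
End LinFacts.

Definition choosex {T : Type} (P : T -> Prop) (h : exists x, P x) : T :=
  proj1_sig (constructive_indefinite_description P h).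
Lemma choosexP {T : Type} (P : T -> Prop) (h : exists x, P x) : P (choosex h).
Proof. exact: proj2_sig (constructive_indefinite_description P h). Qed.

Section Ext.
Variables (A : comPzRingType) (d : nat) (V : lmodType A).
Variable (F : nat -> 'rV[A]_d -> V).
Hypothesis F_lin : forall i, lin (F i).
Definition fsext (g : FS A d) : V := \sum_(i < bnd g) F i (fc g i).
Lemma bnd_le (g : FS A d) B : (forall i, (B <= i)%N -> g@_i = 0) -> (bnd g <= B)%N.
Proof.
move=> h; rewrite /bnd; apply/bigmax_leqP_seq => i hi _.
rewrite ltnNge; apply/negP=> hB; move: hi; rewrite -mcoeff_neq0 h //.
by rewrite eqxx.
Qed.
Lemma fsext_any (g : FS A d) B : (bnd g <= B)%N -> fsext g = \sum_(i < B) F i (fc g i).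
Proof.
move=> hB; rewrite /fsext -(subnKC hB) big_split_ord /= [X in _ + X]big1 ?addr0 //.
by move=> i _; rewrite /fc bnd_out ?leq_addr // (lin0 (F_lin _)).
Qed.
Lemma fsext_lin : lin fsext.
Proof.
move=> a x y.
set B := maxn (bnd (a *: x + y)) (maxn (bnd x) (bnd y)).
have hx : (bnd x <= B)%N by rewrite /B (leq_trans _ (leq_maxr _ _)) ?leq_maxl.
have hy : (bnd y <= B)%N by rewrite /B (leq_trans _ (leq_maxr _ _)) ?leq_maxr.
rewrite !(@fsext_any _ B) ?leq_maxl //.
rewrite scaler_sumr -big_split /=; apply: eq_bigr => i _.
by rewrite /fc mcoeffD fsZE F_lin.
Qed.
Lemma fsextU i v : fsext (fsU i v) = F i v.
Proof.
rewrite (@fsext_any _ i.+1); last by apply: bnd_le => j hj; rewrite fsUE; case: eqP => // e; move: hj; rewrite e ltnn.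
rewrite big_ord_recr /= big1 ?add0r /fc ?fsUE ?eqxx // => j _.
by rewrite fsUE; case: eqP => [e|_]; [move: (ltn_ord j); rewrite -e ltnn | rewrite (lin0 (F_lin _))].
Qed.
End Ext.

Lemma fs_sumU (A : comPzRingType) d (g : FS A d) : g = \sum_(i < bnd g) fsU i (fc g i).
Proof. exact: fs_decomp. Qed.

Lemma fs_projective (A : comPzRingType) d : projective_mod (FS A d).
Proof.
move=> X Y s h s_lin s_surj h_lin.
pose x i k := choosex (s_surj (h (fsU i ('e_k : 'rV[A]_d)))).
have hx i k : s (x i k) = h (fsU i 'e_k) by exact: (choosexP (s_surj _)).
pose L i (v : 'rV[A]_d) := \sum_(k < d) v 0 k *: x i k.
have L_lin i : lin (L i).
  move=> a u v; rewrite /L scaler_sumr -big_split /=; apply: eq_bigr => k _.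
  by rewrite !mxE scalerDl scalerA.
exists (fsext L); split; first exact: fsext_lin.
move=> g; rewrite /fsext (lin_sum s_lin) [in RHS](fs_sumU g) (lin_sum h_lin).
apply: eq_bigr => i _; rewrite /L (lin_sum s_lin) [in RHS](row_sum_delta (fc g i)).
rewrite (lin_sum (fsU_lin i)) (lin_sum h_lin); apply: eq_bigr => k _.
by rewrite (linZ s_lin) hx (linZ (fsU_lin i)) (linZ h_lin).
Qed.
From Stdlib Require Import FunctionalExtensionality.
Section Tele.
Variables (A : comPzRingType) (N : lmodType A) (d : nat).
Variable (T : nat -> 'M[A]_d).
Variable (phi : nat -> 'rV[A]_d -> N).

Fixpoint Tcn (i k : nat) : 'M[A]_d :=
  if k is k'.+1 then Tcn i k' *m T (i + k') else 1%:M.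

Lemma Tcn_add i k l : Tcn i (k + l) = Tcn i k *m Tcn (i + k) l.
Proof.
elim: l => [|l IH]; first by rewrite addn0 /= mulmx1.
by rewrite addnS /= IH -mulmxA addnA.
Qed.

Hypothesis phi_lin : forall i, lin (phi i).
Hypothesis phi_T : forall i x, phi i x = phi i.+1 (x *m T i).
Hypothesis phi_surj : forall y, exists i x, phi i x = y.
Hypothesis phi_ker : forall i x, phi i x = 0 -> exists k, x *m Tcn i k = 0.

Lemma phi_Tcn i k x : phi i x = phi (i + k) (x *m Tcn i k).
Proof.
elim: k => [|k IH]; first by rewrite addn0 /= mulmx1.
by rewrite IH phi_T /= mulmxA addnS.
Qed.

Definition tshift (g : FS A d) : FS A d :=
  \sum_(i < bnd g) fsU i.+1 (fc g i *m T i).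

Lemma tshiftE g j : fc (tshift g) j = if j is j'.+1 then fc g j' *m T j' else 0.
Proof.
rewrite /tshift /fc raddf_sum /=.
under eq_bigr do rewrite fsUE.
case: j => [|j].
  by rewrite big1.
case: (ltnP j (bnd g)) => hj.
  rewrite (bigD1 (Ordinal hj)) //= eqxx big1 ?addr0 // => i /eqP hi.
  by case: eqP => // -[e]; case: hi; apply: val_inj.
rewrite big1; last by move=> i _; case: eqP => // -[e]; move: (ltn_ord i); rewrite e ltnNge hj.
by rewrite bnd_out // mul0mx.
Qed.

Definition tf (g : FS A d) : FS A d := g - tshift g.

Lemma tfE g j : fc (tf g) j = fc g j - (if j is j'.+1 then fc g j' *m T j' else 0).
Proof. by rewrite /tf /fc mcoeffB -tshiftE. Qed.

Lemma tf_lin : lin tf.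
Proof.
move=> a x y; apply: fcP => j.
rewrite !(tfE, fcD, fcZ).
case: j => [|j]; rewrite ?subr0 // !(fcD, fcZ).
by rewrite mulmxDl -scalemxAl scalerBr opprD addrACA.
Qed.

Lemma tf_inj : injective tf.
Proof.
move=> x y e.
have e0 : tf (x - y) = 0 by rewrite (linB tf_lin) e subrr.
suff h : forall j, fc (x - y) j = 0.
  by apply/eqP; rewrite -subr_eq0; apply/eqP/fcP => j; rewrite fc0; apply: h.
elim=> [|j IH].
  by have := congr1 (fun g => fc g 0%N) e0; rewrite tfE subr0 fc0.
by have := congr1 (fun g => fc g j.+1) e0; rewrite tfE IH mul0mx subr0 fc0.
Qed.

Lemma tfU i v : tf (fsU i v) = fsU i v - fsU i.+1 (v *m T i).
Proof.
apply: fcP => j; rewrite tfE fcB !fcU.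
case: j => [|j]; first by rewrite subr0; case: eqP => //.
rewrite fcU eqSS.
case: (i =P j) => [->|ne]; first by [].
by rewrite mul0mx.
Qed.

Definition tg : FS A d -> N := fsext phi.

Lemma tg_lin : lin tg.
Proof. exact: fsext_lin. Qed.

Lemma tgU i v : tg (fsU i v) = phi i v.
Proof. exact: fsextU. Qed.

Lemma tg_tf z : tg (tf z) = 0.
Proof.
rewrite (fs_sumU z) (lin_sum tf_lin) (lin_sum tg_lin) big1 // => i _.
by rewrite tfU (linB tg_lin) !tgU phi_T subrr.
Qed.

Lemma push_step B v : exists z, fsU B v = tf z + fsU B.+1 (v *m T B).
Proof. by exists (fsU B v); rewrite tfU subrK. Qed.

Lemma push B k v : exists z, fsU B v = tf z + fsU (B + k) (v *m Tcn B k).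
Proof.
elim: k => [|k [z IH]]; first by exists 0; rewrite (lin0 tf_lin) add0r addn0 mulmx1.
have [z' e] := push_step (B + k) (v *m Tcn B k).
exists (z + z'); rewrite IH e addrA (lin_add tf_lin) /= mulmxA addnS.
by [].
Qed.

Lemma reduce B g : (bnd g <= B)%N -> exists z w, g = tf z + fsU B w.
Proof.
elim: B g => [|B IH] g hg.
  exists 0, 0; rewrite (lin0 tf_lin) add0r.
  apply: fcP => j; rewrite fcU /fc (bnd_out (leq_trans hg (leq0n j))).
  by case: eqP.
have hg' : (bnd (g - fsU B (fc g B))%R <= B)%N.
  apply: bnd_le => j hj; rewrite -/(fc _ _) fcB fcU.
  case: eqP => [->|ne]; first by rewrite subrr.
  rewrite subr0 /fc bnd_out //; apply: leq_trans hg _.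
  by rewrite ltn_neqAle hj andbT; apply/eqP=> e; case: ne.
have [z [w e]] := IH _ hg'.
have [z' e'] := push_step B (w + fc g B).
exists (z + z'), ((w + fc g B) *m T B).
rewrite (lin_add tf_lin) -addrA -e' (lin_add (fsU_lin B)) addrA -e.
by rewrite subrK.
Qed.

Lemma tele_exact x : tg x = 0 <-> exists z, tf z = x.
Proof.
split; last by move=> [z <-]; apply: tg_tf.
move=> h0.
have [z [w e]] := reduce (leqnn (bnd x)).
have hw : phi (bnd x) w = 0.
  by have := h0; rewrite [in tg x]e (lin_add tg_lin) tg_tf add0r tgU.
have [k hk] := phi_ker hw.
have [z' e'] := push (bnd x) k w.
exists (z + z'); rewrite (lin_add tf_lin) e e' hk.
by rewrite (lin0 (fsU_lin _)) addr0.
Qed.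

Lemma tele_projdim : projdim_le1 N.
Proof.
exists (FS A d), (FS A d), tf, tg; split.
    by split; apply: fs_projective.
  by split; [apply: tf_lin | apply: tg_lin].
  exact: tf_inj.
  by move=> y; have [i [x <-]] := phi_surj y; exists (fsU i x); exact: tgU.
exact: tele_exact.
Qed.

Lemma phi_wd i j x x' : phi i x = phi j x' ->
  exists k, x *m Tcn i (maxn i j - i + k) = x' *m Tcn j (maxn i j - j + k).
Proof.
move=> e; set K := maxn i j.
have hi : (i <= K)%N by apply: leq_maxl.
have hj : (j <= K)%N by apply: leq_maxr.
have e2 : phi K (x *m Tcn i (K - i) - x' *m Tcn j (K - j)) = 0.
  rewrite (linB (phi_lin K)).
  by rewrite -{1}(subnKC hi) -phi_Tcn -{1}(subnKC hj) -phi_Tcn e subrr.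
have [k hk] := phi_ker e2.
exists k; apply/eqP; rewrite -subr_eq0 !Tcn_add (subnKC hi) (subnKC hj).
by rewrite !mulmxA -mulmxBl hk.
Qed.

Definition Tc (i j : nat) : 'M[A]_d := Tcn i (j - i).

Lemma colimit : countable_filtered_colimit_of_free_le N d.
Proof.
exists (nat : countType), leq, (fun _ => d), Tc, phi; split.
        by exists 0%N.
      by split; [exact: leqnn | move=> i j k; exact: leq_trans].
    by move=> i j; exists (maxn i j); rewrite leq_maxl leq_maxr.
  by [].
split.
        by move=> i; rewrite /Tc subnn.
      move=> i j k hij hjk; rewrite /Tc.
      have := Tcn_add i (j - i) (k - j); rewrite (subnKC hij) => <-.
      by congr Tcn; lia.
    exact: phi_lin.
  by move=> i j hij x; rewrite /Tc (phi_Tcn i (j - i)) subnKC.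
move=> Q psi psi_lin psi_T.
have psi_Tcn (i k : nat) x : psi i x = psi (i + k)%N (x *m Tcn i k).
  by rewrite (psi_T _ _ (leq_addr k i)) /Tc addKn.
have wd i j x x' : phi i x = phi j x' -> psi i x = psi j x'.
  move=> /phi_wd [k hk].
  rewrite (psi_Tcn i (maxn i j - i + k)%N) (psi_Tcn j (maxn i j - j + k)%N) hk.
  by rewrite !addnA subnKC ?leq_maxl // subnKC ?leq_maxr.
pose rep y := choosex (phi_surj y).
pose g y := psi (rep y) (choosex (choosexP (phi_surj y))).
have grep i x : g (phi i x) = psi i x.
  by apply: wd; rewrite (choosexP (choosexP (phi_surj (phi i x)))).
exists g; split.
  split; last exact: grep.
  move=> a y y'.
  have [i [x <-]] := phi_surj y; have [j [x' <-]] := phi_surj y'.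
  set K := maxn i j.
  have hi : (i <= K)%N by apply: leq_maxl.
  have hj : (j <= K)%N by apply: leq_maxr.
  rewrite (phi_Tcn i (K - i)) (phi_Tcn j (K - j)) !subnKC //.
  by rewrite -(phi_lin K) !grep (psi_lin K).
move=> g' [g'_lin g'_phi].
apply: functional_extensionality => y.
have [i [x <-]] := phi_surj y.
by rewrite g'_phi grep.
Qed.
End Tele.
From Stdlib Require Import Classical.

Lemma fin_max (I : eqType) (le : I -> I -> Prop)
    (le_total : forall a b, le a b \/ le b a)
    (le_trans : forall a b c, le a b -> le b c -> le a c)
    (P : I -> Prop) (s : seq I) :
  (exists x, x \in s /\ P x) -> exists k, P k /\ forall l, l \in s -> P l -> le l k.
Proof.
have le_refl a : le a a by case: (le_total a a).
elim: s => [|a s IH] [x [hx Px]]; first by [].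
case: (classic (exists x, x \in s /\ P x)) => [/IH [k [Pk hk]]|hn].
  case: (classic (P a)) => Pa.
    case: (le_total a k) => hak.
      exists k; split=> // l; rewrite in_cons => /orP [/eqP -> //|]; exact: hk.
    exists a; split=> // l; rewrite in_cons => /orP [/eqP -> //|hl Pl].
    exact: le_trans (hk l hl Pl) hak.
  exists k; split=> // l; rewrite in_cons => /orP [/eqP -> //|]; exact: hk.
have Pa : P a.
  move: hx; rewrite in_cons => /orP [/eqP <- //|hx]; case: hn; by exists x.
exists a; split=> // l; rewrite in_cons => /orP [/eqP -> //|hl Pl].
by case: hn; exists l.
Qed.

Local Notation "x %:F" := (@FracField.tofrac _ x).

Section Val.
Variable R : idomainType.
Hypothesis hval : valuation_ring R.
Local Notation E := {fraction R}.

Definition rdiv (a b : R) := exists c, b = c * a.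
Definition isu (a : R) := exists c, c * a = 1.
Definition dv (x y : E) := exists a : R, y = a%:F * x.

Lemma rdiv_total a b : rdiv a b \/ rdiv b a.
Proof.
have [->|a0] := eqVneq a 0; first by right; exists 0; rewrite mul0r.
have [->|b0] := eqVneq b 0; first by left; exists 0; rewrite mul0r.
have x0 : b%:F / a%:F != 0 by rewrite mulf_neq0 ?invr_eq0 ?tofrac_eq0.
case: (hval x0) => [[c hc]|[c hc]].
  left; exists c; apply/eqP; rewrite -tofrac_eq rmorphM /= -hc.
  by rewrite mulfVK // tofrac_eq0.
right; exists c; apply/eqP; rewrite -tofrac_eq rmorphM /= -hc invfM invrK.
by rewrite mulrC mulrA mulfV ?mul1r // tofrac_eq0.
Qed.

Lemma rdiv_refl a : rdiv a a. Proof. by exists 1; rewrite mul1r. Qed.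
Lemma rdiv_trans a b c : rdiv a b -> rdiv b c -> rdiv a c.
Proof. by move=> [x ->] [y ->]; exists (y * x); rewrite mulrA. Qed.
Lemma rdiv_mul a b a' b' : rdiv a b -> rdiv a' b' -> rdiv (a * a') (b * b').
Proof. by move=> [x ->] [y ->]; exists (x * y); rewrite mulrACA. Qed.
Lemma rdiv_exp a b N : rdiv a b -> rdiv (a ^+ N) (b ^+ N).
Proof. by move=> [x ->]; exists (x ^+ N); rewrite exprMn. Qed.
Lemma rdiv_expr a N : rdiv a (a ^+ N.+1).
Proof. by exists (a ^+ N); rewrite exprSr. Qed.
Lemma rdiv_exple a N M : (N <= M)%N -> rdiv (a ^+ N) (a ^+ M).
Proof. by move=> h; exists (a ^+ (M - N)); rewrite -exprD subnK. Qed.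

Lemma dv_total x y : dv x y \/ dv y x.
Proof.
have [->|x0] := eqVneq x 0; first by right; exists 0; rewrite rmorph0 mul0r.
have [->|y0] := eqVneq y 0; first by left; exists 0; rewrite rmorph0 mul0r.
have z0 : y / x != 0 by rewrite mulf_neq0 ?invr_eq0.
case: (hval z0) => [[c hc]|[c hc]].
  by left; exists c; rewrite -hc mulfVK.
by right; exists c; rewrite -hc invfM invrK mulrC mulrA mulfV ?mul1r.
Qed.
Lemma dv_refl x : dv x x. Proof. by exists 1; rewrite rmorph1 mul1r. Qed.
Lemma dv_trans x y z : dv x y -> dv y z -> dv x z.
Proof. by move=> [a ->] [b ->]; exists (b * a); rewrite rmorphM mulrA. Qed.
Lemma dv0 x : dv x 0. Proof. by exists 0; rewrite rmorph0 mul0r. Qed.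
Lemma dv_mul x y x' y' : dv x y -> dv x' y' -> dv (x * x') (y * y').
Proof. by move=> [a ->] [b ->]; exists (a * b); rewrite rmorphM mulrACA. Qed.
Lemma dv_exp x y N : dv x y -> dv (x ^+ N) (y ^+ N).
Proof. by move=> [a ->]; exists (a ^+ N); rewrite exprMn rmorphXn. Qed.
Lemma dv_mulr x y z : dv x y -> dv (x * z) (y * z).
Proof. by move=> h; apply: dv_mul h (dv_refl z). Qed.
Lemma dv_frac x a b : rdiv a b -> dv (x * a%:F) (x * b%:F).
Proof. by move=> [c ->]; exists c; rewrite rmorphM mulrCA. Qed.
Lemma dv_cancel x y z : z != 0 -> dv (x * z) (y * z) -> dv x y.
Proof. by move=> z0 [a ha]; exists a; apply: (mulIf z0); rewrite ha mulrA. Qed.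

Lemma dv_exp_inv x y N : dv (x ^+ N.+1) (y ^+ N.+1) -> dv x y.
Proof.
move=> h; case: (dv_total x y) => // -[a ha].
have [y0|y0] := eqVneq y 0; first by rewrite y0; apply: dv0.
move: h => [b hb]; rewrite ha exprMn mulrA -rmorphXn -rmorphM in hb.
have e : b * a ^+ N.+1 = 1.
  apply/eqP; rewrite -tofrac_eq rmorph1; apply/eqP.
  by apply: (mulIf (expf_neq0 N.+1 y0)); rewrite mul1r -hb.
exists (b * a ^+ N); rewrite ha mulrA -rmorphM -mulrA -exprSr e rmorph1.
by rewrite mul1r.
Qed.
End Val.
Lemma ex_min_prop (P : nat -> Prop) : (exists m, P m) ->
  exists m, P m /\ forall m', (m' < m)%N -> ~ P m'.
Proof.
move=> [m Pm]; elim: m {-2}m (leqnn m) Pm => [|N IH] m hm Pm.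
  by exists m; split=> // m'; move: hm; rewrite leqn0 => /eqP ->.
case: (classic (exists m', (m' < m)%N /\ P m')) => [[m' [hm' Pm']]|hn].
  by apply: (IH m') => //; rewrite -ltnS (leq_trans hm' hm).
exists m; split=> // m' hm' Pm'; apply: hn; by exists m'.
Qed.

Section Cut.
Variable R : idomainType.
Hypothesis hval : valuation_ring R.
Local Notation E := {fraction R}.
Variables (n : nat) (h : 'I_n -> R).
Hypothesis hcl : forall b : R, b != 0 -> ~ isu b ->
  exists k, (exists N, rdiv b (h k ^+ N)) /\ (exists N, rdiv (h k) (b ^+ N)).

Variable J : E -> Prop.
Hypothesis J0 : J 0.
Hypothesis JM : forall a x, J x -> J (a%:F * x).

Definition pickJ (P : E -> Prop) : E :=
  epsilon (inhabits 0) (fun x => J x /\ (P x \/ forall y, J y -> ~ P y)).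
Lemma pickJ_spec P : J (pickJ P) /\ (P (pickJ P) \/ forall y, J y -> ~ P y).
Proof.
apply: (epsilon_spec (inhabits 0) (fun x => J x /\ (P x \/ forall y, J y -> ~ P y))).
case: (classic (exists y, J y /\ P y)) => [[y [Jy Py]]|hn].
  by exists y; split=> //; left.
exists 0; split=> //; right=> y Jy Py; apply: hn; by exists y.
Qed.
Lemma pickJ_J P : J (pickJ P). Proof. by case: (pickJ_spec P). Qed.
Lemma pickJ_P P y : J y -> P y -> P (pickJ P).
Proof. by move=> Jy Py; case: (pickJ_spec P) => _ [//|/(_ y Jy)]. Qed.

Definition cA0 := pickJ (fun x => forall y, J y -> dv x y).
Definition cAk k := pickJ (fun x => forall y, J y -> y != 0 ->
   exists N, dv x (y * (h k ^+ N)%:F)).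
Definition cBk k m j := pickJ (fun x => ~ dv (cAk k ^+ j) (x ^+ j * (h k ^+ m)%:F)).

Definition ccode := option ('I_n * option (nat * nat)).
Definition cand (c : ccode) : E :=
  match c with
  | None => cA0
  | Some (k, None) => cAk k
  | Some (k, Some (m, j)) => cBk k m j
  end.
Lemma cand_J c : J (cand c).
Proof. by case: c => [[k [[m j]|]]|]; apply: pickJ_J. Qed.

Definition lev_le (l k : 'I_n) := exists N, rdiv (h l) (h k ^+ N).
Lemma lev_total l k : lev_le l k \/ lev_le k l.
Proof.
by case: (rdiv_total hval (h l) (h k)) => hh; [left|right]; exists 1%N; rewrite expr1.
Qed.
Lemma lev_trans a b c : lev_le a b -> lev_le b c -> lev_le a c.
Proof.
move=> [N hN] [M hM]; exists (M * N)%N; apply: rdiv_trans hN _.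
by rewrite exprM; apply: rdiv_exp.
Qed.

Lemma below_nonunit (y s : E) : y != 0 -> s != 0 -> dv y s -> ~ dv s y ->
  exists a : R, [/\ s = a%:F * y, a != 0 & ~ isu a].
Proof.
move=> y0 s0 [a ha] hn; exists a; split=> //.
  by apply/eqP=> a0; move: s0; rewrite ha a0 rmorph0 mul0r eqxx.
move=> [c hc]; apply: hn; exists c; rewrite ha mulrA -rmorphM hc rmorph1.
by rewrite mul1r.
Qed.

Lemma cover s : J s -> exists c, dv (cand c) s.
Proof.
move=> Js.
have [->|s0] := eqVneq s 0; first by exists None; apply: dv0.
case: (classic (forall y, J y -> dv s y)) => hmin.
  by exists None; exact: (@pickJ_P (fun x => forall y, J y -> dv x y) s Js hmin).
have [y0 [Jy0 hy0]] : exists y, J y /\ ~ dv s y.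
  apply: NNPP => hn; apply: hmin => y Jy; apply: NNPP => hd; apply: hn; by exists y.
pose S (l : 'I_n) := exists y, [/\ J y, y != 0, ~ dv s y &
   exists a : R, [/\ s = a%:F * y, (exists N, rdiv a (h l ^+ N)) &
                   (exists N, rdiv (h l) (a ^+ N))]].
have Sne : exists l, l \in enum 'I_n /\ S l.
  have y00 : y0 != 0 by apply/eqP=> e; apply: hy0; rewrite e; apply: dv0.
  have dys : dv y0 s by case: (dv_total hval s y0).
  have [a [ha a0 au]] := below_nonunit y00 s0 dys hy0.
  have [l [hl1 hl2]] := hcl a0 au.
  by exists l; split; [rewrite mem_enum | exists y0; split=> //; exists a].
have [k [Sk kmax]] := fin_max lev_total lev_trans Sne.
have sF : forall y, J y -> y != 0 -> exists N, dv s (y * (h k ^+ N)%:F).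
  move=> y Jy yn0.
  case: (classic (dv s y)) => hsy.
    by exists 0%N; rewrite expr0 rmorph1 mulr1.
  have dys : dv y s by case: (dv_total hval s y).
  have [a [ha a0 au]] := below_nonunit yn0 s0 dys hsy.
  have [l [[N1 hl1] [N2 hl2]]] := hcl a0 au.
  have Sl : S l by exists y; split=> //; exists a; split=> //; [exists N1 | exists N2].
  have [M hM] := kmax l (mem_enum _ _) Sl.
  exists (M * N1)%N; rewrite ha mulrC; apply: dv_frac.
  apply: rdiv_trans hl1 _; rewrite exprM; exact: rdiv_exp.
set c := cAk k.
have hc := @pickJ_P (fun x => forall y, J y -> y != 0 ->
   exists N, dv x (y * (h k ^+ N)%:F)) s Js sF.
rewrite -/(cAk k) -/c in hc.
case: (classic (dv c s)) => hcs; first by exists (Some (k, None)).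
have [N0 hN0] := hc s Js s0.
move: Sk => [y [Jy yn0 hsy [a [ha [N1 hN1] [N2 hN2]]]]].
set j := N2.+1.
have hj : rdiv (h k) (a ^+ j) by apply: rdiv_trans hN2 _; exact: rdiv_exple.
have exm : exists m, dv (c ^+ j) (s ^+ j * (h k ^+ m)%:F).
  exists (N0 * j)%N; rewrite exprM rmorphXn -exprMn; exact: dv_exp.
have [m2 [hm2 hmin2]] := ex_min_prop exm.
case: m2 hm2 hmin2 => [|m1] hm2 hmin2.
  by case: hcs; apply: (@dv_exp_inv _ hval _ _ N2); rewrite expr0 rmorph1 mulr1 in hm2.
have hnm1 := hmin2 m1 (ltnSn m1).
have PB : ~ dv (c ^+ j) (y ^+ j * (h k ^+ m1.+1)%:F).
  move=> hd; apply: hnm1; apply: dv_trans hd _.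
  have [t ht] := hj.
  exists t; rewrite ha exprMn -rmorphXn ht exprS !rmorphM /=.
  ring.
exists (Some (k, Some (m1.+1, j))) => /=.
have hB := @pickJ_P (fun x => ~ dv (c ^+ j) (x ^+ j * (h k ^+ m1.+1)%:F)) y Jy PB; rewrite -/c -/(cBk k m1.+1 j) in hB.
case: (dv_total hval (cBk k m1.+1 j) s) => // hsx.
case: hB; apply: dv_trans hm2 _; apply: dv_mulr; exact: dv_exp.
Qed.

Lemma cut : exists f : nat -> E, (forall i, J (f i)) /\ forall y, J y -> exists i, dv (f i) y.
Proof.
exists (fun i => match (@choice.unpickle ccode i) with Some c => cand c | None => 0 end).
split.
  by move=> i; case: (choice.unpickle i) => [c|] //; apply: cand_J.
move=> y Jy; have [c hc] := cover Jy.
by exists (choice.pickle c); rewrite choice.pickleK.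
Qed.
End Cut.
Section Classes.
Variable R : idomainType.
Hypothesis hval : valuation_ring R.

Definition rad (b : R) (x : R) := exists N, rdiv b (x ^+ N).

Lemma rad_prime b : b != 0 -> ~ isu b -> nonzero_prime_ideal (rad b).
Proof.
move=> b0 bu; split; last by exists b; split=> //; exists 1%N; rewrite expr1; apply: rdiv_refl.
split.
- by exists 1%N; exists 0; rewrite expr1 mul0r.
- move=> x y [N [e hx]] [M [f hy]].
  case: (rdiv_total hval x y) => [[c ->]|[c ->]].
    exists N; exists ((c + 1) ^+ N * e).
    have -> : x + c * x = (c + 1) * x by ring.
    by rewrite exprMn hx mulrA.
  exists M; exists ((c + 1) ^+ M * f).
  have -> : c * y + y = (c + 1) * y by ring.
  by rewrite exprMn hy mulrA.
- move=> r a [N [e he]]; exists N; exists (r ^+ N * e).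
  by rewrite exprMn he mulrA.
- by move=> [N [e he]]; apply: bu; exists e; rewrite -he expr1n.
- move=> x y [N [e he]].
  case: (rdiv_total hval x y) => [[c hc]|[c hc]].
    right; exists (N + N)%N; exists (c ^+ N * e).
    have -> : y ^+ (N + N)%N = c ^+ N * (x * y) ^+ N by rewrite exprD {1}hc !exprMn; ring.
    by rewrite he mulrA.
  left; exists (N + N)%N; exists (c ^+ N * e).
  have -> : x ^+ (N + N)%N = c ^+ N * (x * y) ^+ N by rewrite exprD {1}hc !exprMn; ring.
  by rewrite he mulrA.
Qed.

Hypothesis hrank : finite_rank R.

Lemma classes : exists n (h : 'I_n -> R), forall b : R, b != 0 -> ~ isu b ->
  exists k, (exists N, rdiv b (h k ^+ N)) /\ (exists N, rdiv (h k) (b ^+ N)).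
Proof.
have [n [Jr hJ]] := hrank.
pose P (k : nat) (b : R) := [/\ b != 0, ~ isu b & forall x, rad b x <-> Jr k x].
exists n, (fun k => epsilon (inhabits 0) (P k)) => b b0 bu.
have [k [kn hk]] := hJ _ (rad_prime b0 bu).
exists (Ordinal kn) => /=.
have := epsilon_spec (inhabits 0) (P k) (ex_intro _ b (And3 b0 bu hk)).
set hb := epsilon _ _ => -[_ _ hhb].
split.
  have : rad hb hb by exists 1%N; rewrite expr1; apply: rdiv_refl.
  by move/hhb/hk.
have : rad b b by exists 1%N; rewrite expr1; apply: rdiv_refl.
by move/hk/hhb.
Qed.
End Classes.
Lemma frac_lin_aux (F : fieldType) (S S' A0 X Y : F) : S != 0 -> S' != 0 ->
 (A0 * S' * X + S * Y) / (S * S') = A0 * (X / S) + Y / S'.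
Proof. by move=> s0 s'0; field; rewrite s0 s'0. Qed.

Section Coord.
Variable R : idomainType.
Hypothesis hval : valuation_ring R.
Local Notation E := {fraction R}.
Variable M : lmodType R.
Hypothesis htf : torsionfree M.
Variables (d : nat) (m : 'I_d -> M).
Hypothesis hind : forall r : 'I_d -> R, \sum_(k < d) r k *: m k = 0 -> forall k, r k = 0.
Hypothesis hspan : forall x : M, exists (s : R) (r : 'I_d -> R),
        s != 0 /\ s *: x = \sum_(k < d) r k *: m k.

Definition rep x s (r : 'I_d -> R) := s != 0 /\ s *: x = \sum_(k < d) r k *: m k.

Lemma rep_uniq x s r s' r' : rep x s r -> rep x s' r' -> forall k, s' * r k = s * r' k.
Proof.
move=> [s0 hx] [s'0 hx'] k; apply/eqP; rewrite -subr_eq0; apply/eqP.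
apply: (hind (r := fun k => s' * r k - s * r' k)).
have e : s' *: (s *: x) = s *: (s' *: x) by rewrite !scalerA mulrC.
rewrite hx hx' !scaler_sumr in e.
rewrite (eq_bigr (fun k => s' *: (r k *: m k) - s *: (r' k *: m k))); last first.
  by move=> i _; rewrite scalerBl !scalerA.
by rewrite sumrB e subrr.
Qed.

Lemma rep_ex x : exists sr : R * ('I_d -> R), rep x sr.1 sr.2.
Proof. by have [s [r h]] := hspan x; exists (s, r). Qed.

Definition coord (x : M) (k : 'I_d) : E :=
  let sr := choosex (rep_ex x) in (sr.2 k)%:F / (sr.1)%:F.

Lemma coordE x s r : rep x s r -> forall k, coord x k = (r k)%:F / s%:F.
Proof.
move=> hr k; rewrite /coord.
have hc := choosexP (rep_ex x); set sr := choosex _ in hc *.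
have e := rep_uniq hr hc k.
have s0 : s%:F != 0 by rewrite tofrac_eq0; case: hr.
have s'0 : (sr.1)%:F != 0 by rewrite tofrac_eq0; case: hc.
apply/eqP; rewrite eqr_div // -!rmorphM /=; apply/eqP; congr tofrac.
by rewrite mulrC -e mulrC.
Qed.

Lemma rep_lin a x y s r s' r' : rep x s r -> rep y s' r' ->
  rep (a *: x + y) (s * s') (fun k => a * s' * r k + s * r' k).
Proof.
move=> [s0 hx] [s'0 hy]; split; first by rewrite mulf_neq0.
have -> : (s * s') *: (a *: x + y) = (a * s') *: (s *: x) + s *: (s' *: y).
  by rewrite scalerDr !scalerA; congr (_ *: _ + _ *: _); ring.
rewrite hx hy !scaler_sumr -big_split /=; apply: eq_bigr => k _.
by rewrite !scalerA scalerDl.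
Qed.

Lemma coord_lin a x y k : coord (a *: x + y) k = a%:F * coord x k + coord y k.
Proof.
have [[s r] hx] := rep_ex x; have [[s' r'] hy] := rep_ex y.
rewrite (coordE (rep_lin a hx hy)) (coordE hx) (coordE hy) /=.
have s0 : s%:F != 0 by rewrite tofrac_eq0; case: hx.
have s'0 : s'%:F != 0 by rewrite tofrac_eq0; case: hy.
rewrite !rmorphD !rmorphM /=.
exact: frac_lin_aux.
Qed.

Lemma rep0 : rep 0 1 (fun _ => 0).
Proof. by split; [exact: oner_neq0 | rewrite scaler0 big1 // => k _; rewrite scale0r]. Qed.

Lemma coord0 k : coord 0 k = 0.
Proof. by rewrite (coordE rep0) rmorph0 mul0r. Qed.

Lemma coord_eq0 x : (forall k, coord x k = 0) -> x = 0.
Proof.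
move=> h; have [[s r] [s0 hx]] := rep_ex x; rewrite /= in s0 hx.
have r0 k : r k = 0.
  have := h k; rewrite (coordE (conj s0 hx)) /= => /eqP.
  by rewrite mulf_eq0 invr_eq0 !tofrac_eq0 (negbTE s0) orbF => /eqP.
have : s *: x = 0 by rewrite hx big1 // => k _; rewrite r0 scale0r.
by case/htf => // e; move: s0; rewrite e eqxx.
Qed.

Lemma coordZ a x k : coord (a *: x) k = a%:F * coord x k.
Proof. by rewrite -[a *: x]addr0 coord_lin coord0 addr0. Qed.

Lemma coordN x k : coord (- x) k = - coord x k.
Proof. by rewrite -scaleN1r coordZ rmorphN rmorph1 mulN1r. Qed.

Lemma coord_m j k : coord (m j) k = (j == k)%:R.
Proof.
have hr : rep (m j) 1 (fun k => (j == k)%:R).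
  split; first exact: oner_neq0.
  rewrite scale1r (bigD1 j) //= eqxx scale1r big1 ?addr0 // => i /negbTE.
  by rewrite eq_sym => ->; rewrite scale0r.
by rewrite (coordE hr) rmorph1 invr1 mulr1; case: eqP; rewrite ?rmorph1 ?rmorph0.
Qed.

Definition MM (k : nat) (x : M) := forall j : 'I_d, (k <= j)%N -> coord x j = 0.
Definition Jk (kk : 'I_d) (e : E) := exists x, MM kk.+1 x /\ coord x kk = e.

Variables (n : nat) (h : 'I_n -> R).
Hypothesis hcl : forall b : R, b != 0 -> ~ isu b ->
  exists k, (exists N, rdiv b (h k ^+ N)) /\ (exists N, rdiv (h k) (b ^+ N)).

Lemma Jk_cut (kk : 'I_d) : exists f : nat -> E, (forall i, Jk kk (f i)) /\
   forall y, Jk kk y -> exists i, dv (f i) y.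
Proof.
have J0 : Jk kk 0.
  by exists 0; split; [move=> j _; apply: coord0 | apply: coord0].
exact: (cut hval hcl J0).
Qed.

Definition fk (kk : 'I_d) := choosex (Jk_cut kk).
Lemma gk_ex (kk : 'I_d) (i : nat) : exists x, MM kk.+1 x /\ coord x kk = fk kk i.
Proof. by case: (choosexP (Jk_cut kk)) => /(_ i). Qed.
Definition gk (kk : 'I_d) (i : nat) := choosex (gk_ex kk i).

Definition gen (i : nat) : M :=
  match @choice.unpickle ('I_d * nat)%type i with Some (kk, j) => gk kk j | None => 0 end.

Lemma generation (S : M -> Prop) : S 0 ->
  (forall a x y, S x -> S y -> S (a *: x + y)) ->
  (forall i, S (gen i)) -> forall x, S x.
Proof.
move=> S0 Slin Sg.
have Sgk kk i : S (gk kk i).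
  by have := Sg (choice.pickle (kk, i)); rewrite /gen choice.pickleK.
suff hk : forall k x, MM k x -> S x.
  by move=> x; apply: (hk d) => j; rewrite leqNgt ltn_ord.
elim=> [|k IH] x hx.
  suff -> : x = 0 by [].
  by apply: coord_eq0 => j; apply: hx.
case: (ltnP k d) => hkd; last first.
  by apply: IH => j hj; move: (ltn_ord j); rewrite ltnNge (leq_trans hkd hj).
set kk := Ordinal hkd.
have [_ hcov] := choosexP (Jk_cut kk).
have [i [a ha]] := hcov (coord x kk) (ex_intro _ x (conj hx erefl)).
have [hg1 hg2] := choosexP (gk_ex kk i).
have e : x = a *: gk kk i + ((- a) *: gk kk i + x).
  by rewrite addrA -scalerDl subrr scale0r add0r.
rewrite e; apply: Slin; first exact: Sgk.
apply: IH => j hj.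
rewrite coord_lin.
case: (ltnP k j) => hkj.
  by rewrite hg1 // hx // mulr0 addr0.
have -> : j = kk by apply: val_inj; apply/eqP; rewrite eqn_leq hj hkj.
rewrite hg2 ha rmorphN mulNr -/(fk kk i) addNr.
by [].
Qed.
End Coord.
Section Lat.
Variable R : idomainType.
Hypothesis hval : valuation_ring R.
Variable M : lmodType R.
Hypothesis htf : torsionfree M.
Variables (d : nat) (m : 'I_d -> M).
Hypothesis hind : forall r : 'I_d -> R, \sum_(k < d) r k *: m k = 0 -> forall k, r k = 0.
Hypothesis hspan : forall x : M, exists (s : R) (r : 'I_d -> R),
        s != 0 /\ s *: x = \sum_(k < d) r k *: m k.

Definition comb (b : 'I_d -> M) (r : 'rV[R]_d) : M := \sum_(k < d) r 0 k *: b k.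
Definition indep (b : 'I_d -> M) := forall r, comb b r = 0 -> r = 0.
Definition lspan (b : 'I_d -> M) x := exists r, x = comb b r.
Definition linv (b : 'I_d -> M) := indep b /\ forall j, lspan b (m j).
Definition trans_rel (b b' : 'I_d -> M) (T : 'M[R]_d) :=
  forall j, b j = \sum_(l < d) T j l *: b' l.

Lemma comb_lin b a r r' : comb b (a *: r + r') = a *: comb b r + comb b r'.
Proof.
rewrite /comb scaler_sumr -big_split /=; apply: eq_bigr => k _.
by rewrite !mxE scalerDl scalerA.
Qed.
Lemma comb0 b : comb b 0 = 0.
Proof. by rewrite /comb big1 // => k _; rewrite mxE scale0r. Qed.
Lemma combZ b a r : comb b (a *: r) = a *: comb b r.
Proof. by rewrite -[a *: r]addr0 comb_lin comb0 addr0. Qed.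
Lemma combB b r r' : comb b (r - r') = comb b r - comb b r'.
Proof. by rewrite -scaleN1r -[r - _]addrC -scaleN1r comb_lin scaleN1r addrC. Qed.
Lemma comb_sum b (I : Type) (s : seq I) (F : I -> 'rV[R]_d) :
  comb b (\sum_(i <- s) F i) = \sum_(i <- s) comb b (F i).
Proof.
elim/big_rec2: _ => [|i y1 y2 _ <-]; first exact: comb0.
by have := comb_lin b 1 (F i) y2; rewrite !scale1r.
Qed.

Lemma comb_trans b b' T r : trans_rel b b' T -> comb b r = comb b' (r *m T).
Proof.
move=> hT; rewrite /comb.
under eq_bigr do rewrite hT scaler_sumr.
rewrite exchange_big /=; apply: eq_bigr => l _.
rewrite mxE scaler_suml; apply: eq_bigr => j _.
by rewrite scalerA.
Qed.

Lemma span_trans b b' T x : trans_rel b b' T -> lspan b x -> lspan b' x.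
Proof. by move=> hT [r ->]; exists (r *m T); apply: comb_trans. Qed.

Lemma span_lin b a x y : lspan b x -> lspan b y -> lspan b (a *: x + y).
Proof. by move=> [r ->] [r' ->]; exists (a *: r + r'); rewrite comb_lin. Qed.
Lemma span0 b : lspan b 0.
Proof. by exists 0; rewrite comb0. Qed.

Lemma indep_m : indep m.
Proof.
move=> r hr; apply/rowP => k; rewrite mxE.
by apply: (hind (r := fun k => r 0 k)).
Qed.
Lemma inv_m : linv m.
Proof.
split; first exact: indep_m.
move=> j; exists (delta_mx 0 j); rewrite /comb (bigD1 j) //= mxE !eqxx scale1r.
by rewrite big1 ?addr0 // => i /negbTE hi; rewrite mxE hi andbF scale0r.
Qed.

Lemma inv_scal b : linv b -> forall x, exists s r, s != 0 /\ s *: x = comb b r.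
Proof.
move=> [_ hb] x; have [s [r [s0 hx]]] := hspan x.
pose u k := choosex (hb k).
have hu k : m k = comb b (u k) := choosexP (hb k).
exists s, (\sum_(k < d) r k *: u k); split=> //.
rewrite hx comb_sum; apply: eq_bigr => k _.
by rewrite combZ -hu.
Qed.

Lemma comb_delta b k : comb b (delta_mx 0 k) = b k.
Proof.
rewrite /comb (bigD1 k) //= mxE !eqxx scale1r.
by rewrite big1 ?addr0 // => i /negbTE hi; rewrite mxE hi andbF scale0r.
Qed.

Lemma step b : linv b -> forall x, exists bT : ('I_d -> M) * 'M[R]_d,
  [/\ linv bT.1, lspan bT.1 x & trans_rel b bT.1 bT.2].
Proof.
move=> hb x; have [s [r [s0 hx]]] := inv_scal hb x.
case: (classic (forall l, rdiv s (r 0 l))) => hall.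
  pose w := \row_l choosex (hall l).
  have hr : r = s *: w.
    by apply/rowP => l; rewrite !mxE mulrC; exact: (choosexP (hall l)).
  have hxw : x = comb b w.
    have : s *: (x - comb b w) = 0 by rewrite scalerBr hx hr combZ subrr.
    case/htf => [e|/eqP]; first by move: s0; rewrite e eqxx.
    by rewrite subr_eq0 => /eqP.
  exists (b, 1%:M); split=> //=; first by exists w.
  move=> j; rewrite (bigD1 j) //= mxE eqxx mulr1n scale1r big1 ?addr0 //.
  by move=> i /negbTE hi; rewrite mxE eq_sym hi mulr0n scale0r.
have [l0 hl0] : exists l0, ~ rdiv s (r 0 l0).
  by apply: NNPP => hn; apply: hall => l; apply: NNPP => h; apply: hn; exists l.
have [k [_ hk]] := @fin_max _ (fun l k => rdiv (r 0 k) (r 0 l))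
   (fun a b => rdiv_total hval (r 0 b) (r 0 a))
   (fun a b c hab hbc => rdiv_trans hbc hab) (fun _ => True) (enum 'I_d)
   (ex_intro _ l0 (conj (mem_enum _ l0) I)).
have hdiv l : rdiv (r 0 k) (r 0 l) by apply: hk; rewrite ?mem_enum.
have rks : rdiv (r 0 k) s.
  case: (rdiv_total hval s (r 0 l0)) => // h0.
  exact: rdiv_trans (hdiv l0) h0.
have rk0 : r 0 k != 0.
  by apply/eqP=> e; move: rks s0; rewrite e => -[c ->]; rewrite mulr0 eqxx.
pose u := choosex rks.
have hu : s = u * r 0 k := choosexP rks.
have u0 : u != 0 by apply/eqP=> e; move: s0; rewrite hu e mul0r eqxx.
pose w := \row_l choosex (hdiv l).
have hr : r = r 0 k *: w.
  by apply/rowP => l; rewrite !mxE mulrC; exact: (choosexP (hdiv l)).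
clearbody w.
have wk : w 0 k = 1.
  have : (w 0 k - 1) * r 0 k = 0.
    have e : r 0 k = r 0 k * w 0 k by rewrite {1}hr mxE.
    by rewrite mulrBl mul1r mulrC -e subrr.
  by move/eqP; rewrite mulf_eq0 (negbTE rk0) orbF subr_eq0 => /eqP.
have hux : u *: x = comb b w.
  have : r 0 k *: (u *: x - comb b w) = 0.
    by rewrite scalerBr scalerA mulrC -hu hx -combZ -hr subrr.
  case/htf => [e|/eqP]; first by move: rk0; rewrite e eqxx.
  by rewrite subr_eq0 => /eqP.
pose b' := fun l => if l == k then x else b l.
pose T := \matrix_(j, l) if j == k then (if l == k then u else - w 0 l) else (j == l)%:R.
have hT : trans_rel b b' T.
  move=> j; case: (eqVneq j k) => [->|hjk].
    rewrite (bigD1 k) //= mxE /b' !eqxx.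
    have -> : \sum_(l < d | l != k) T k l *: b' l = - \sum_(l < d | l != k) w 0 l *: b l.
      rewrite -sumrN; apply: eq_bigr => l /negbTE hl.
      by rewrite mxE eqxx hl /b' hl scaleNr.
    by rewrite hux /comb (bigD1 k) //= wk scale1r addrK.
  rewrite (bigD1 j) //= mxE eqxx (negbTE hjk) scale1r /b' (negbTE hjk).
  rewrite big1 ?addr0 // => l /negbTE hl; rewrite mxE (negbTE hjk) eq_sym hl.
  by rewrite scale0r.
exists (b', T); split=> //=; last first.
  by exists (delta_mx 0 k); rewrite comb_delta /b' eqxx.
split; last by move=> j; apply: span_trans hT _; case: hb => _; apply.
move=> a ha.
pose a' := \row_l (if l == k then 0 else a 0 l).
have hca : comb b' a = a 0 k *: x + comb b a'.
  rewrite /comb (bigD1 k) //= [in RHS](bigD1 k) //= /b' !mxE !eqxx scale0r add0r.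
  congr (_ + _); apply: eq_bigr => l /negbTE hl.
  by rewrite mxE hl.
have h0 : comb b (a 0 k *: w + u *: a') = 0.
  by rewrite comb_lin combZ -hux scalerA mulrC -scalerA -scalerDr -hca ha scaler0.
have := (proj1 hb) _ h0 => /rowP hz.
have ak : a 0 k = 0.
  by have := hz k; rewrite !mxE wk mulr1 eqxx mulr0 addr0.
apply/rowP => l; rewrite mxE.
case: (eqVneq l k) => [->//|hl].
have := hz l; rewrite !mxE ak mul0r add0r (negbTE hl).
by move/eqP; rewrite mulf_eq0 (negbTE u0) => /eqP.
Qed.
End Lat.
Section Main.
Variable (p : nat) (R : idomainType).
Hypothesis hval : valuation_ring R.
Variable M : lmodType R.
Hypothesis htf : torsionfree M.
Variables (d : nat) (m : 'I_d -> M).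
Hypothesis hind : forall r : 'I_d -> R, \sum_(k < d) r k *: m k = 0 -> forall k, r k = 0.
Hypothesis hspan : forall x : M, exists (s : R) (r : 'I_d -> R),
        s != 0 /\ s *: x = \sum_(k < d) r k *: m k.
Variables (Rp : comPzRingType) (q : {rmorphism R -> Rp}).
Hypothesis hq_surj : forall y : Rp, exists a : R, q a = y.
Hypothesis hq_ker : forall a : R, q a = 0 <-> exists c : R, a = p%:R * c.
Variables (N : lmodType Rp) (pi : M -> N).
Hypothesis hpi_add : forall x y : M, pi (x + y) = pi x + pi y.
Hypothesis hpi_scale : forall (r : R) (x : M), pi (r *: x) = q r *: pi x.
Hypothesis hpi_surj : forall y : N, exists x : M, pi x = y.
Hypothesis hpi_ker : forall x : M, pi x = 0 <-> exists z : M, x = p%:R *: z.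
Variable G : nat -> M.
Hypothesis hG : forall S : M -> Prop, S 0 ->
  (forall a x y, S x -> S y -> S (a *: x + y)) -> (forall i, S (G i)) -> forall x, S x.

Record st := St { sb : 'I_d -> M; sinv : linv m sb }.

Definition nextp (s : st) (x : M) := choosex (step hval htf hspan (sinv s) x).
Lemma nextpP s x : [/\ linv m (nextp s x).1, lspan (nextp s x).1 x &
   trans_rel (sb s) (nextp s x).1 (nextp s x).2].
Proof. exact: (choosexP (step hval htf hspan (sinv s) x)). Qed.
Lemma nextp_inv s x : linv m (nextp s x).1.
Proof. by case: (nextpP s x). Qed.

Fixpoint seqst (k : nat) : st :=
  if k is k'.+1 then St (nextp_inv (seqst k') (G k')) else St (inv_m hind).

Definition Bn k := sb (seqst k).
Definition TR k := (nextp (seqst k) (G k)).2.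
Lemma hTR k : trans_rel (Bn k) (Bn k.+1) (TR k).
Proof. by case: (nextpP (seqst k) (G k)). Qed.
Lemma hGspan k : lspan (Bn k.+1) (G k).
Proof. by case: (nextpP (seqst k) (G k)). Qed.
Lemma Bn_inv k : linv m (Bn k).
Proof. exact: sinv. Qed.

Lemma comb_Tcn k j r : comb (Bn k) r = comb (Bn (k + j)) (r *m Tcn TR k j).
Proof.
elim: j => [|j IH]; first by rewrite addn0 /= mulmx1.
by rewrite IH (comb_trans _ (hTR (k + j))) /= mulmxA addnS.
Qed.

Lemma span_up k j x : lspan (Bn k) x -> lspan (Bn (k + j)) x.
Proof. by move=> [r ->]; exists (r *m Tcn TR k j); apply: comb_Tcn. Qed.

Lemma all_span x : exists k, lspan (Bn k) x.
Proof.
apply: (hG (S := fun x => exists k, lspan (Bn k) x)).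
    by exists 0%N; apply: span0.
  move=> a x' y [k1 h1] [k2 h2]; exists (maxn k1 k2).
  apply: span_lin.
    by rewrite -(subnKC (leq_maxl k1 k2)); apply: span_up.
  by rewrite -(subnKC (leq_maxr k1 k2)); apply: span_up.
by move=> i; exists i.+1; apply: hGspan.
Qed.

Definition Tq k : 'M[Rp]_d := map_mx q (TR k).
Definition phi k (v : 'rV[Rp]_d) : N := \sum_(l < d) v 0 l *: pi (Bn k l).

Lemma pi0 : pi 0 = 0.
Proof. by apply: (addrI (pi 0)); rewrite -hpi_add !addr0. Qed.
Lemma pi_sum (I : Type) (s : seq I) (F : I -> M) :
  pi (\sum_(i <- s) F i) = \sum_(i <- s) pi (F i).
Proof. by elim/big_rec2: _ => [|i y1 y2 _ <-]; [exact: pi0 | rewrite hpi_add]. Qed.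

Lemma pi_comb k r : pi (comb (Bn k) r) = phi k (map_mx q r).
Proof. by rewrite /comb pi_sum; apply: eq_bigr => l _; rewrite hpi_scale mxE. Qed.

Lemma phi_lin k : lin (phi k).
Proof.
move=> a u v; rewrite /phi scaler_sumr -big_split /=; apply: eq_bigr => l _.
by rewrite !mxE scalerDl scalerA.
Qed.

Lemma phi_T k v : phi k v = phi k.+1 (v *m Tq k).
Proof.
rewrite /phi.
under eq_bigr do rewrite (hTR k) pi_sum scaler_sumr.
rewrite exchange_big /=; apply: eq_bigr => l _.
rewrite mxE scaler_suml; apply: eq_bigr => j _.
by rewrite hpi_scale scalerA /Tq mxE.
Qed.

Lemma phi_surj y : exists k v, phi k v = y.
Proof.
have [x <-] := hpi_surj y; have [k [r ->]] := all_span x.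
by exists k, (map_mx q r); rewrite pi_comb.
Qed.

Lemma Tcn_map i j : map_mx q (Tcn TR i j) = Tcn Tq i j.
Proof.
elim: j => [|j IH] /=; first exact: map_mx1.
by rewrite map_mxM IH.
Qed.

Lemma qp : q p%:R = 0.
Proof. by apply/hq_ker; exists 1; rewrite mulr1. Qed.

Lemma phi_ker k v : phi k v = 0 -> exists j, v *m Tcn Tq k j = 0.
Proof.
move=> h0.
pose r := \row_l choosex (hq_surj (v 0 l)).
have hr : map_mx q r = v.
  by apply/rowP => l; rewrite !mxE; exact: (choosexP (hq_surj (v 0 l))).
have [z hz] : exists z, comb (Bn k) r = p%:R *: z by apply/hpi_ker; rewrite pi_comb hr.
have [k' [w hw]] := all_span z.
set K := maxn k k'.
have hk : (k <= K)%N by apply: leq_maxl.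
have hk' : (k' <= K)%N by apply: leq_maxr.
have e1 := comb_Tcn k (K - k) r; rewrite subnKC // in e1.
have e2 := comb_Tcn k' (K - k') w; rewrite subnKC // in e2.
have h : comb (Bn K) (r *m Tcn TR k (K - k) - p%:R *: (w *m Tcn TR k' (K - k'))) = 0.
  by rewrite combB combZ -e1 -e2 -hw hz subrr.
have := (proj1 (Bn_inv K)) _ h; move/eqP; rewrite subr_eq0 => /eqP e.
exists (K - k)%N.
by rewrite -hr -Tcn_map -map_mxM e map_mxZ qp scale0r.
Qed.

Lemma main_concl : countable_filtered_colimit_of_free_le N d /\ projdim_le1 N.
Proof.
split; first exact: (colimit phi_lin phi_T phi_surj phi_ker).
exact: (tele_projdim phi_lin phi_T phi_surj phi_ker).
Qed.
End Main.
Unset Implicit Arguments.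
Theorem lemma3p10 (p : nat) (hp : prime p)
    (R : idomainType) (hval : valuation_ring R) (hrank : finite_rank R)
    (M : lmodType R) (htf : torsionfree M)
    (d : nat) (hdim : tensor_frac_dim M d)
    (Rp : comPzRingType) (q : {rmorphism R -> Rp})
    (hq_surj : forall y : Rp, exists a : R, q a = y)
    (hq_ker : forall a : R, q a = 0 <-> exists c : R, a = p%:R * c)
    (N : lmodType Rp) (pi : M -> N)
    (hpi_add : forall x y : M, pi (x + y) = pi x + pi y)
    (hpi_scale : forall (r : R) (x : M), pi (r *: x) = q r *: pi x)
    (hpi_surj : forall y : N, exists x : M, pi x = y)
    (hpi_ker : forall x : M, pi x = 0 <-> exists z : M, x = p%:R *: z) :
  countable_filtered_colimit_of_free_le N d /\ projdim_le1 N.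
Proof.
case: hdim => m [hind hspan].
have [n [h hcl]] := classes hval hrank.
apply: (@main_concl p R hval M htf d m hind hspan Rp q hq_surj hq_ker N pi
   hpi_add hpi_scale hpi_surj hpi_ker (@gen R hval M d m hind hspan n h hcl)).
move=> S S0 Slin Sg.
exact: (@generation R hval M htf d m hind hspan n h hcl S S0 Slin Sg).
Qed.
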